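(* Suppose Assumption A holds, so that $\mathcal A_e:=I_{\bar n-1}\otimes A-L_e\otimes BC$ is Hurwitz. Let $\bar P_e=\int_0^\infty e^{\mathcal A_e t}(E^\top G\otimes B)(E^\top G\otimes B)^\top e^{\mathcal A_e^\top t}\,dt$ be the edge controllability Gramian and $\bar Q_f=\int_0^\infty e^{\mathcal A_e^\top t}(HF\otimes C)^\top(HF\otimes C)e^{\mathcal A_e t}\,dt$ the edge observability Gramian. Let $\tilde\Pi^c,\tilde\Pi^o\in\mathbb{R}^{(\bar n-1)\times(\bar n-1)}$ be diagonal positive semidefinite matrices satisfying $L_e\tilde\Pi^c+\tilde\Pi^cL_e^\top-E^\top GG^\top E\succeq0$ and $L_e^\top\tilde\Pi^o+\tilde\Pi^oL_e-F^\top H^\top HF\succeq0$. Then $\bar P_e\preceq\tilde\Pi^c\otimes Q^{-1}$ and $\bar Q_f\preceq\tilde\Pi^o\otimes Q$.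
   Context: Subsystem data: $Q=Q^\top\succ0$, $J=-J^\top$, $R=R^\top\succeq0$ in $\mathbb{R}^{n\times n}$, $B\in\mathbb{R}^{n\times m}$, $A=(J-R)Q$, $C=B^\top Q$, with $(A,B,C)$ minimal. Weights $w_{ij}\ge0$ ($i\ne j\in\{1,\dots,\bar n\}$, $\bar n\ge 2$); $L_{ij}=-w_{ij}$ for $i\neq j$, $L_{ii}=\sum_{j\ne i}w_{ij}$; $G\in\mathbb{R}^{\bar n\times\bar m}$, $H\in\mathbb{R}^{\bar p\times\bar n}$. The directed graph $\mathcal G$ on $\{1,\dots,\bar n\}$ has an arc $(i,j)$ iff $w_{ji}>0$; the underlying undirected graph $\mathcal G_u$ has an edge between $i$ and $j$ iff $w_{ij}+w_{ji}>0$. $E$ is an oriented incidence matrix of $\mathcal G_u$ (the column for an edge between $i$ and $j$ oriented from $i$ to $j$ is $e_i-e_j$) and $F$ is the matrix of the same size whose corresponding column is $w_{ij}e_i-w_{ji}e_j$ (so $L=FE^\top$). The edge Laplacian is $L_e=E^\top F$. A directed rooted spanning tree is a subgraph of $\mathcal G$ that is a directed tree containing all vertices in which every vertex except one root has exactly one incoming arc. Assumption A: (i) $\mathcal G_u$ is a tree; (ii) $\mathcal G$ contains a directed rooted spanning tree as a subgraph. $\otimes$ is the Kronecker product; $X\preceq Y$ means $Y-X$ is positive semidefinite. *)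

(* Defs.v *)
From HB Require Import structures.
From Stdlib Require Import Reals ClassicalEpsilon FunctionalExtensionality.
From mathcomp Require Import all_boot all_order all_algebra.

Set Implicit Arguments.
Unset Strict Implicit.
Unset Printing Implicit Defensive.

Import GRing.Theory.

Local Open Scope R_scope.

Definition Req_bool (x y : R) : bool := if Req_EM_T x y then true else false.

Lemma Req_boolP : Equality.axiom Req_bool.
Proof. by move=> x y; rewrite /Req_bool; case: Req_EM_T => h; constructor. Qed.

HB.instance Definition _ := hasDecEq.Build R Req_boolP.

Definition R_find (P : pred R) (_ : nat) : option R :=
  match excluded_middle_informative (exists x, P x) with
  | left h => Some (proj1_sig (constructive_indefinite_description _ h))
  | right _ => None
  end.

Lemma R_find_correct P n x : R_find P n = Some x -> P x.
Proof.
rewrite /R_find; case: excluded_middle_informative => // h [<-].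
exact: (proj2_sig (constructive_indefinite_description _ h)).
Qed.

Lemma R_find_complete (P : pred R) : (exists x, P x) -> exists n, R_find P n.
Proof. by move=> h; exists 0%N; rewrite /R_find; case: excluded_middle_informative. Qed.

Lemma R_find_ext (P Q : pred R) : P =1 Q -> R_find P =1 R_find Q.
Proof.
move=> h; have -> : P = Q by apply: functional_extensionality.
by [].
Qed.

HB.instance Definition _ :=
  hasChoice.Build R R_find_correct R_find_complete R_find_ext.

Lemma R_addA : ssrfun.associative Rplus. Proof. by move=> *; rewrite Rplus_assoc. Qed.
Lemma R_addC : ssrfun.commutative Rplus. Proof. exact: Rplus_comm. Qed.
Lemma R_add0 : ssrfun.left_id 0 Rplus. Proof. exact: Rplus_0_l. Qed.
Lemma R_addN : ssrfun.left_inverse 0 Ropp Rplus. Proof. exact: Rplus_opp_l. Qed.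

HB.instance Definition _ := GRing.isZmodule.Build R R_addA R_addC R_add0 R_addN.

Lemma R_mulA : ssrfun.associative Rmult. Proof. by move=> *; rewrite Rmult_assoc. Qed.
Lemma R_mulC : ssrfun.commutative Rmult. Proof. exact: Rmult_comm. Qed.
Lemma R_mul1 : ssrfun.left_id 1 Rmult. Proof. exact: Rmult_1_l. Qed.
Lemma R_mulDl : ssrfun.left_distributive Rmult Rplus.
Proof. by move=> *; rewrite Rmult_plus_distr_r. Qed.
Lemma R_one_neq0 : (1 : R) != 0 :> R.
Proof. by apply/eqP; exact: R1_neq_R0. Qed.

HB.instance Definition _ :=
  GRing.Zmodule_isComNzRing.Build R R_mulA R_mulC R_mul1 R_mulDl R_one_neq0.

Definition R_inv (x : R) : R := if x == 0 :> R then 0 else Rinv x.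

Lemma R_mulV (x : R) : x != 0 -> (R_inv x * x)%R = 1.
Proof.
by move=> /negbTE hx; rewrite /R_inv hx; apply: Rinv_l => h; rewrite h eqxx in hx.
Qed.

Lemma R_inv0 : R_inv 0 = 0.
Proof. by rewrite /R_inv eqxx. Qed.

HB.instance Definition _ := GRing.ComNzRing_isField.Build R R_mulV R_inv0.

Local Open Scope ring_scope.

(* Kronecker product A (x) B, with the standard row-major index pairing
   (i1, i2) |-> i1 * m2 + i2 (same convention as mxvec_index). *)
Definition kron (m1 n1 m2 n2 : nat) (A : 'M[R]_(m1, n1)) (B : 'M[R]_(m2, n2))
  : 'M[R]_(m1 * m2, n1 * n2) :=
  \matrix_(k, l)
    (let pk := enum_val (cast_ord (esym (mxvec_cast m1 m2)) k) in
     let pl := enum_val (cast_ord (esym (mxvec_cast n1 n2)) l) in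
     A pk.1 pl.1 * B pk.2 pl.2).

Definition qform (n : nat) (M : 'M[R]_n) (v : 'cV[R]_n) : R :=
  (v^T *m M *m v) 0 0.

Definition psd (n : nat) (M : 'M[R]_n) : Prop :=
  M^T = M /\ forall v : 'cV[R]_n, Rle 0 (qform M v).

Definition pd (n : nat) (M : 'M[R]_n) : Prop :=
  M^T = M /\ forall v : 'cV[R]_n, v != 0 -> Rlt 0 (qform M v).

Definition loewner_le (n : nat) (X Y : 'M[R]_n) : Prop := psd (Y - X).

Definition skew_sym (n : nat) (J : 'M[R]_n) : Prop := J^T = - J.

Definition diagonal (n : nat) (D : 'M[R]_n) : Prop :=
  forall i j : 'I_n, i != j -> D i j = 0.

Definition controllable (n m : nat) (A : 'M[R]_n) (B : 'M[R]_(n, m)) : Prop :=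
  \rank (\mxrow_(k < n) (A ^+ k *m B)) = n.

Definition observable (n p : nat) (A : 'M[R]_n) (C : 'M[R]_(p, n)) : Prop :=
  \rank (\mxcol_(k < n) (C *m A ^+ k)) = n.

Definition minimal (n m p : nat) (A : 'M[R]_n) (B : 'M[R]_(n, m))
  (C : 'M[R]_(p, n)) : Prop := controllable A B /\ observable A C.

Definition is_expm (n : nat) (A : 'M[R]_n) (X : R -> 'M[R]_n) : Prop :=
  forall (t : R) (i j : 'I_n),
    Un_cv (fun N => (\sum_(k < N.+1)
                       (Rdiv (pow t k) (INR (Factorial.fact k)) *: A ^+ k)) i j)
          (X t i j).

Definition improper_int0 (f : R -> R) (l : R) : Prop :=
  exists pr : forall T : R, Riemann_integrable f 0 T,
    forall eps : R, Rlt 0 eps ->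
      exists T0 : R, forall T : R, Rle T0 T ->
        Rlt (Rabs (Rminus (RiemannInt (pr T)) l)) eps.

Definition mx_improper_int0 (k l : nat) (F : R -> 'M[R]_(k, l))
  (P : 'M[R]_(k, l)) : Prop :=
  forall i j, improper_int0 (fun t => F t i j) (P i j).

Definition ctrb_gramian (k q : nat) (M : 'M[R]_k) (N : 'M[R]_(k, q))
  (P : 'M[R]_k) : Prop :=
  exists X Y : R -> 'M[R]_k,
    [/\ is_expm M X, is_expm M^T Y &
        mx_improper_int0 (fun t => X t *m N *m N^T *m Y t) P].

Definition obsv_gramian (k q : nat) (M : 'M[R]_k) (N : 'M[R]_(q, k))
  (P : 'M[R]_k) : Prop :=
  exists X Y : R -> 'M[R]_k,
    [/\ is_expm M X, is_expm M^T Y &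
        mx_improper_int0 (fun t => Y t *m N^T *m N *m X t) P].

Definition Rpos (x : R) : bool := if Rlt_dec 0 x then true else false.

Definition und_adj (nb : nat) (w : 'I_nb -> 'I_nb -> R) : rel 'I_nb :=
  fun i j => (i != j) && Rpos (w i j + w j i).

Definition is_tree (nb : nat) (adj : rel 'I_nb) : Prop :=
  (forall i j, connect adj i j) /\
  (forall c : seq 'I_nb, uniq c -> (2 < size c)%N -> ~~ cycle adj c).

(* G contains a directed rooted spanning tree: a root r and a parent map
   par such that for each v <> r, (par v, v) is an arc of G (i.e.
   w_{v, par v} > 0), and following parents from any vertex reaches r. *)
Definition has_rooted_spanning_tree (nb : nat) (w : 'I_nb -> 'I_nb -> R) : Prop :=
  exists (r : 'I_nb) (par : 'I_nb -> 'I_nb),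
    (forall v, v != r -> Rlt 0 (w v (par v))) /\
    (forall v, exists k, iter k par v = r).

Definition AssumptionA (nb : nat) (w : 'I_nb -> 'I_nb -> R) : Prop :=
  is_tree (und_adj w) /\ has_rooted_spanning_tree w.

(* ed : 'I_K -> vertex pairs is an enumeration of the edges of G_u, each
   edge exactly once, with orientation (ed e).1 -> (ed e).2 *)
Definition edge_enum (nb K : nat) (w : 'I_nb -> 'I_nb -> R)
  (ed : 'I_K -> 'I_nb * 'I_nb) : Prop :=
  [/\ forall e, und_adj w (ed e).1 (ed e).2,
      forall i j, und_adj w i j -> exists e, ed e = (i, j) \/ ed e = (j, i)
    & forall e e', ed e = ed e' \/ ed e = ((ed e').2, (ed e').1) -> e = e'].

Definition incE (nb K : nat) (ed : 'I_K -> 'I_nb * 'I_nb) : 'M[R]_(nb, K) :=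
  \matrix_(v, e) (if v == (ed e).1 then 1 else if v == (ed e).2 then -1 else 0).

Definition incF (nb K : nat) (w : 'I_nb -> 'I_nb -> R)
  (ed : 'I_K -> 'I_nb * 'I_nb) : 'M[R]_(nb, K) :=
  \matrix_(v, e) (if v == (ed e).1 then w (ed e).1 (ed e).2
                  else if v == (ed e).2 then - w (ed e).2 (ed e).1 else 0).

Definition laplacian (nb : nat) (w : 'I_nb -> 'I_nb -> R) : 'M[R]_nb :=
  \matrix_(i, j) (if i == j then \sum_(k | k != i) w i k else - w i j).

Definition edge_laplacian (nb K : nat) (w : 'I_nb -> 'I_nb -> R)
  (ed : 'I_K -> 'I_nb * 'I_nb) : 'M[R]_K :=
  (incE ed)^T *m incF w ed.

(* Main.v *)
From Coquelicot Require Import Coquelicot.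
Require Import Defs.
From HB Require Import structures.
From Stdlib Require Import Reals Lra FunctionalExtensionality.
From mathcomp Require Import all_boot all_order all_algebra.
Import GRing.Theory.
Set Implicit Arguments. Unset Strict Implicit. Unset Printing Implicit Defensive.
Local Open Scope ring_scope.


Lemma addRE (x y : R) : x + y = Rplus x y. Proof. by []. Qed.
Lemma mulRE (x y : R) : x * y = Rmult x y. Proof. by []. Qed.
Lemma oppRE (x : R) : - x = Ropp x. Proof. by []. Qed.
Lemma zeroRE : (0 : R) = IZR 0. Proof. by []. Qed.
Lemma oneRE : (1 : R) = IZR 1. Proof. by []. Qed.
Lemma subRE (x y : R) : x - y = Rminus x y. Proof. by []. Qed.
Definition RE := (subRE, addRE, mulRE, oppRE, zeroRE, oneRE).

Section BigR.
Context {I : Type} (r : seq I) (P : pred I).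

Lemma sum_le (F G : I -> R) : (forall i, P i -> Rle (F i) (G i)) ->
  Rle (\sum_(i <- r | P i) F i) (\sum_(i <- r | P i) G i).
Proof.
move=> H; apply: (big_rec2 (fun x y => Rle x y)); first exact: Rle_refl.
by move=> i x y Pi Hxy; rewrite !addRE; apply: Rplus_le_compat => //; apply: H.
Qed.

Lemma sum_ge0 (F : I -> R) : (forall i, P i -> Rle 0 (F i)) ->
  Rle 0 (\sum_(i <- r | P i) F i).
Proof.
move=> H; apply: (big_rec (fun x => Rle 0 x)); first exact: Rle_refl.
by move=> i x Pi Hx; rewrite !addRE; have := H i Pi; lra.
Qed.

Lemma Rabs_sum (F : I -> R) :
  Rle (Rabs (\sum_(i <- r | P i) F i)) (\sum_(i <- r | P i) Rabs (F i)).
Proof.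
apply: (big_rec2 (fun x y => Rle (Rabs x) y)).
  by rewrite Rabs_R0; exact: Rle_refl.
move=> i x y Pi Hxy; rewrite !addRE.
apply: Rle_trans (Rabs_triang _ _) _; lra.
Qed.
End BigR.

Lemma Rle_addr0 (a b : R) : Rle 0 b -> Rle a (GRing.add a b).
Proof. rewrite addRE; lra. Qed.

Lemma term_le_sum (I : finType) (F : I -> R) (j : I) :
  (forall i, Rle 0 (F i)) -> Rle (F j) (\sum_i F i).
Proof.
move=> H; rewrite (bigD1 j) //; apply: Rle_addr0; apply: sum_ge0 => i _; exact: H.
Qed.

Ltac Rring := match goal with |- ?a = ?b => change (@eq R a b) end; cbn; unfold Rdiv; ring.
Ltac Rfield := match goal with |- ?a = ?b => change (@eq R a b) end; cbn; unfold Rdiv; field.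


Definition mxc k (M : 'M[R]_k) : R := \sum_i \sum_l Rabs (M i l).

Lemma mxc_ge0 k (M : 'M[R]_k) : Rle 0 (mxc M).
Proof. apply: sum_ge0 => i _; apply: sum_ge0 => l _; exact: Rabs_pos. Qed.

Lemma col_le_mxc k (M : 'M[R]_k) j : Rle (\sum_l Rabs (M l j)) (mxc M).
Proof.
rewrite /mxc; apply: sum_le => l _ /=; apply: term_le_sum => b; exact: Rabs_pos.
Qed.

Lemma expmx_bound k (M : 'M[R]_k) n i j : Rle (Rabs ((M ^+ n) i j)) (pow (mxc M) n).
Proof.
elim: n i j => [|n IH] i j.
  rewrite expr0 /= mxE; case: (i == j) => /=; rewrite ?Rabs_R1 ?Rabs_R0; lra.
rewrite exprSr -mulmxE mxE /=.
apply: Rle_trans (Rabs_sum _ _ _) _.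
apply: (@Rle_trans _ (\sum_l GRing.mul (pow (mxc M) n) (Rabs (M l j))))...
  apply: sum_le => l _; rewrite mulRE Rabs_mult; apply: Rmult_le_compat_r; [exact: Rabs_pos| exact: IH].
rewrite -mulr_sumr mulRE /= (Rmult_comm (mxc M)); apply: Rmult_le_compat_l; first by apply: pow_le; exact: mxc_ge0.
exact: col_le_mxc.
Qed.


Lemma is_series_zero : is_series (fun _ : nat => IZR 0) (IZR 0).
Proof.
apply/is_series_Reals => eps Heps; exists 0%N => n _.
rewrite sum_cte Rmult_0_l /Rdist Rminus_0_r Rabs_R0; lra.
Qed.

Lemma is_series_sum (I : Type) (r : seq I) (f : I -> nat -> R) (L : I -> R) :
  (forall i, is_series (f i) (L i)) ->
  is_series (fun n => \sum_(i <- r) f i n) (\sum_(i <- r) L i).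
Proof.
move=> H; elim: r => [|a r IH].
  rewrite big_nil; apply: is_series_ext is_series_zero => n; by rewrite big_nil.
rewrite big_cons; apply: is_series_ext (is_series_plus _ _ _ _ (H a) IH) => n.
by rewrite big_cons.
Qed.


Definition acoef k (M : 'M[R]_k) (i j : 'I_k) (n : nat) : R := Rdiv ((M ^+ n) i j) (INR (Factorial.fact n)).

Lemma partial_entry k (M : 'M[R]_k) t N i j :
  (\sum_(q < N.+1) (Rdiv (pow t q) (INR (Factorial.fact q)) *: M ^+ q)) i j
  = sum_f_R0 (fun n => Rmult (acoef M i j n) (pow t n)) N.
Proof.
rewrite summxE; elim: N => [|N IH].
  rewrite big_ord1 mxE /acoef /=; Rring.
rewrite big_ord_recr IH tech5 mxE /acoef -[nat_of_ord ord_max]/(N.+1); Rring.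
Qed.

Lemma expm_series k (M : 'M[R]_k) (X : R -> 'M[R]_k) (HX : is_expm M X) (t : R) (i j : 'I_k) :
  is_series (fun n => Rmult (acoef M i j n) (pow t n)) (X t i j).
Proof.
have H := HX t i j.
apply is_series_Reals; intros eps Heps.
case: (H eps Heps) => N HN; exists N => n Hn.
rewrite -partial_entry; exact: HN.
Qed.

Lemma expm_PSeries k (M : 'M[R]_k) X : is_expm M X -> forall t i j, X t i j = PSeries (acoef M i j) t.
Proof. by move=> HX t i j; rewrite /PSeries (is_series_unique _ _ (@expm_series k M X HX t i j)). Qed.

Lemma acoef_radius k (M : 'M[R]_k) i j x : Rbar_lt (Rabs x) (CV_radius (acoef M i j)).
Proof.
set r := Rplus (Rabs x) 1.
have Hr : Rle 0 r by rewrite /r; have := Rabs_pos x; lra.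
have c0 := mxc_ge0 M.
have Hd : CV_disk (acoef M i j) r.
  rewrite /CV_disk.
  apply: (ex_series_le _ (fun n => Rdiv (pow (Rmult (mxc M) r) n) (INR (Factorial.fact n)))).
    move=> n; rewrite /norm /= /abs /= Rabs_Rabsolu Rabs_mult /acoef /Rdiv Rabs_mult.
    rewrite (Rabs_pos_eq (pow r n)); last exact: pow_le.
    rewrite (Rabs_pos_eq (/ INR (Factorial.fact n))); last first.
      by apply: Rlt_le; apply: Rinv_0_lt_compat; exact: INR_fact_lt_0.
    rewrite Rpow_mult_distr.
    have Hf : Rle 0 (/ INR (Factorial.fact n)).
      by apply: Rlt_le; apply: Rinv_0_lt_compat; exact: INR_fact_lt_0.
    have Hb := expmx_bound M n i j.
    have Hp : Rle 0 (pow r n) by apply: pow_le.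
    replace (Rmult (Rmult (pow (mxc M) n) (pow r n)) (/ INR (Factorial.fact n)))
      with (Rmult (pow (mxc M) n) (Rmult (/ INR (Factorial.fact n)) (pow r n))) by ring.
    rewrite Rmult_assoc; apply: Rmult_le_compat => //; first exact: Rabs_pos.
      exact: Rmult_le_pos.
    exact: Rle_refl.
  exists (exp (Rmult (mxc M) r)).
  apply: is_series_ext (is_exp_Reals (Rmult (mxc M) r)) => n.
  by rewrite /scal /= /mult /= pow_n_pow /Rdiv Rmult_comm.
have := (proj1 (Lub_Rbar_correct (CV_disk (acoef M i j)))) r Hd.
rewrite -/(CV_radius _); case: (CV_radius _) => //= z Hz.
rewrite /r in Hz; lra.
Qed.

Lemma expm_deriv k (M : 'M[R]_k) X : is_expm M X -> forall t i j,
  is_derive (fun s => X s i j) t ((X t *m M) i j).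
Proof.
move=> HX t i j.
have H1 := is_derive_PSeries (acoef M i j) t (acoef_radius M i j t).
have -> : (X t *m M) i j = PSeries (PS_derive (acoef M i j)) t.
  rewrite /PSeries; symmetry; apply: is_series_unique.
  rewrite mxE.
  have Hs := @is_series_sum _ (index_enum 'I_k)
    (fun l n => Rmult (Rmult (acoef M i l n) (pow t n)) (M l j))
    (fun l => Rmult (X t i l) (M l j))
    (fun l => is_series_scal_r _ _ _ (@expm_series k M X HX t i l)).
  apply: is_series_ext Hs => n.
  rewrite /PS_derive /acoef exprSr -mulmxE mxE.
  have Hf : INR (Factorial.fact n) <> 0 by apply: INR_fact_neq_0.
  have Hn : INR (S n) <> 0 by apply: not_0_INR.
  rewrite fact_simpl mult_INR.
  set S := (\sum_(j0 < k) (M ^+ n) i j0 * M j0 j).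
  have -> : Rmult (Rmult (INR n.+1) (Rdiv S (Rmult (INR n.+1) (INR (Factorial.fact n))))) (pow t n)
    = Rmult (Rmult S (/ INR (Factorial.fact n))) (pow t n).
    by field.
  rewrite /S -!mulRE !mulr_suml; apply: eq_bigr => l _; Rring.
apply: is_derive_ext H1 => s; by rewrite (expm_PSeries HX).
Qed.


Lemma trmx_expr k (M : 'M[R]_k) q : (M^T) ^+ q = (M ^+ q)^T.
Proof.
elim: q => [|q IH]; first by rewrite !expr0 trmx1.
by rewrite exprS exprSr IH -!mulmxE trmx_mul.
Qed.

Lemma Un_cv_const (c : R) : Un_cv (fun _ => c) c.
Proof. move=> eps Heps; exists 0%N => n _; rewrite /Rdist Rminus_diag Rabs_R0; lra. Qed.

Lemma expm_tr k (M : 'M[R]_k) X Y : is_expm M X -> is_expm M^T Y ->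
  forall t, Y t = (X t)^T.
Proof.
move=> HX HY t; apply/matrixP => i j; rewrite mxE.
apply: (UL_sequence _ _ _ (HY t i j)).
have := HX t j i; apply: Un_cv_ext => N.
rewrite !summxE; apply: eq_bigr => q _; by rewrite !mxE trmx_expr mxE.
Qed.

Lemma expm0 k (M : 'M[R]_k) X : is_expm M X -> X 0 = 1%:M.
Proof.
move=> HX; apply/matrixP => i j.
apply: (UL_sequence _ _ _ (HX 0 i j)).
apply: Un_cv_ext (Un_cv_const ((1%:M : 'M[R]_k) i j)) => N.
rewrite big_ord_recl big1 ?addr0.
  by rewrite expr0 /= /Rdiv Rinv_1 Rmult_1_l scale1r.
by move=> q _; rewrite /= Rmult_0_l /Rdiv Rmult_0_l scale0r.
Qed.


Lemma is_derive_bigsum (I : Type) (r : seq I) (f : I -> R -> R) (df : I -> R) x :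
  (forall i, is_derive (f i) x (df i)) ->
  is_derive (fun t => \sum_(i <- r) f i t) x (\sum_(i <- r) df i).
Proof.
move=> H; elim: r => [|a r IH].
  rewrite big_nil; apply: is_derive_ext (is_derive_const (0 : R) x) => t; by rewrite big_nil.
rewrite big_cons; apply: is_derive_ext (is_derive_plus _ _ _ _ _ (H a) IH) => t.
by rewrite big_cons.
Qed.

Lemma is_derive_mulR (f g : R -> R) x df dg : is_derive f x df -> is_derive g x dg ->
  is_derive (fun t => f t * g t) x (df * g x + f x * dg).
Proof. move=> H1 H2; apply: (is_derive_mult f g x df dg H1 H2) => *; exact: Rmult_comm. Qed.

Lemma is_derive_mulRc (f : R -> R) x df c : is_derive f x df ->
  is_derive (fun t => f t * c) x (df * c).
Proof.
move=> H; have -> : df * c = Rmult c df by rewrite mulRE Rmult_comm.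
apply: is_derive_ext (is_derive_scal f x c df H) => t /=.
by rewrite mulRE Rmult_comm.
Qed.

Lemma continuous_bigsum (I : Type) (r : seq I) (f : I -> R -> R) x :
  (forall i, continuous (f i) x) -> continuous (fun t => \sum_(i <- r) f i t) x.
Proof.
move=> H; elim: r => [|a r IH].
  apply: continuous_ext (continuous_const (0 : R) x) => t; by rewrite big_nil.
apply: continuous_ext (continuous_plus _ _ _ (H a) IH) => t.
by rewrite big_cons.
Qed.

Lemma continuous_mulR (f g : R -> R) x : continuous f x -> continuous g x ->
  continuous (fun t => f t * g t) x.
Proof. move=> H1 H2; exact: (continuous_mult f g x H1 H2). Qed.

Lemma is_RInt_bigsum (I : Type) (r : seq I) (f : I -> R -> R) (L : I -> R) a b :
  (forall i, is_RInt (f i) a b (L i)) ->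
  is_RInt (fun t => \sum_(i <- r) f i t) a b (\sum_(i <- r) L i).
Proof.
move=> H; elim: r => [|c r IH].
  rewrite big_nil; apply: is_RInt_ext => [t _|]; first by rewrite big_nil.
  have := is_RInt_const a b (0 : R); rewrite /scal /= /mult /= Rmult_0_r; exact.
rewrite big_cons; apply: is_RInt_ext (is_RInt_plus _ _ _ _ _ _ (H c) IH) => t _.
by rewrite big_cons.
Qed.

Lemma is_RInt_mulRc (f : R -> R) a b l c : is_RInt f a b l ->
  is_RInt (fun t => f t * c) a b (l * c).
Proof.
move=> H; have -> : l * c = Rmult c l by rewrite mulRE Rmult_comm.
apply: is_RInt_ext (is_RInt_scal f a b c l H) => t _ /=.
by rewrite /scal /= /mult /= mulRE Rmult_comm.
Qed.

Lemma is_RInt_mulcR (f : R -> R) a b l c : is_RInt f a b l ->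
  is_RInt (fun t => c * f t) a b (c * l).
Proof.
move=> H; apply: is_RInt_ext (is_RInt_scal f a b c l H) => t _ //.
Qed.

Definition bil p (S : 'M[R]_p) (u w : 'cV[R]_p) : R :=
  \sum_j (\sum_i u i 0 * S i j) * w j 0.

Lemma bilE p (S : 'M[R]_p) u w : (u^T *m S *m w) 0 0 = bil S u w.
Proof.
rewrite /bil !mxE; apply: eq_bigr => j _; rewrite !mxE; congr (_ * _).
by apply: eq_bigr => i _; rewrite mxE.
Qed.

Lemma qformE p (S : 'M[R]_p) w : qform S w = bil S w w.
Proof. exact: bilE. Qed.

Lemma is_derive_bil p (S : 'M[R]_p) (a b : R -> 'cV[R]_p) (da db : 'cV[R]_p) x :
  (forall i, is_derive (fun t => a t i 0) x (da i 0)) ->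
  (forall i, is_derive (fun t => b t i 0) x (db i 0)) ->
  is_derive (fun t => bil S (a t) (b t)) x (bil S da (b x) + bil S (a x) db).
Proof.
move=> Ha Hb; rewrite /bil -big_split; apply: is_derive_bigsum => j /=.
apply: is_derive_mulR (Hb j); apply: is_derive_bigsum => i.
exact: is_derive_mulRc.
Qed.

Lemma continuous_bil p (S : 'M[R]_p) (a b : R -> 'cV[R]_p) x :
  (forall i, continuous (fun t => a t i 0) x) ->
  (forall i, continuous (fun t => b t i 0) x) ->
  continuous (fun t => bil S (a t) (b t)) x.
Proof.
move=> Ha Hb; apply: continuous_bigsum => j.
apply: continuous_mulR (Hb j); apply: continuous_bigsum => i.
apply: continuous_mulR (Ha i) _; exact: continuous_const.
Qed.

Lemma is_derive_mulmxv p q (A : R -> 'M[R]_(p, q)) (dA : 'M[R]_(p, q)) (v : 'cV[R]_q) x :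
  (forall i l, is_derive (fun t => A t i l) x (dA i l)) ->
  forall i, is_derive (fun t => (A t *m v) i 0) x ((dA *m v) i 0).
Proof.
move=> H i; apply: (is_derive_ext (fun t => \sum_l A t i l * v l 0)) => [t|].
  by rewrite mxE.
rewrite mxE; apply: is_derive_bigsum => l; exact: is_derive_mulRc.
Qed.

Lemma is_RInt_qform p (F : R -> 'M[R]_p) (Im : 'M[R]_p) (v : 'cV[R]_p) a b :
  (forall i j, is_RInt (fun t => F t i j) a b (Im i j)) ->
  is_RInt (fun t => qform (F t) v) a b (qform Im v).
Proof.
move=> H; apply: (is_RInt_ext (fun t => bil (F t) v v)) => [t _|].
  by rewrite qformE.
rewrite qformE; apply: is_RInt_bigsum => j; apply: is_RInt_mulRc; apply: is_RInt_bigsum => i; exact: is_RInt_mulcR.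
Qed.


Definition lim_pinf (f : R -> R) (l : R) : Prop :=
  forall eps, Rlt 0 eps -> exists T0, forall T, Rle T0 T -> Rlt (Rabs (Rminus (f T) l)) eps.

Lemma lim_pinf_plus f g l1 l2 : lim_pinf f l1 -> lim_pinf g l2 ->
  lim_pinf (fun T => f T + g T) (l1 + l2).
Proof.
move=> H1 H2 eps He.
have He2 : Rlt 0 (Rdiv eps 2) by lra.
case: (H1 _ He2) => T1 HT1; case: (H2 _ He2) => T2 HT2.
exists (Rmax T1 T2) => T hT.
have h1 := HT1 T (Rle_trans _ _ _ (Rmax_l _ _) hT).
have h2 := HT2 T (Rle_trans _ _ _ (Rmax_r _ _) hT).
rewrite !addRE.
replace (Rminus (Rplus (f T) (g T)) (Rplus l1 l2)) with
  (Rplus (Rminus (f T) l1) (Rminus (g T) l2)) by ring.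
apply: Rle_lt_trans (Rabs_triang _ _) _; lra.
Qed.

Lemma lim_pinf_const c : lim_pinf (fun _ => c) c.
Proof. move=> eps He; exists 0 => T _; rewrite Rminus_diag Rabs_R0; lra. Qed.

Lemma lim_pinf_mulRc f l c : lim_pinf f l -> lim_pinf (fun T => f T * c) (l * c).
Proof.
move=> H eps He.
have Hc : Rlt 0 (Rplus (Rabs c) 1) by have := Rabs_pos c; lra.
have He2 : Rlt 0 (Rdiv eps (Rplus (Rabs c) 1)) by apply: Rdiv_lt_0_compat.
case: (H _ He2) => T0 HT; exists T0 => T hT; have h := HT T hT.
rewrite !mulRE.
replace (Rminus (Rmult (f T) c) (Rmult l c)) with (Rmult (Rminus (f T) l) c) by ring.
rewrite Rabs_mult.
apply: (@Rle_lt_trans _ (Rmult (Rabs (Rminus (f T) l)) (Rplus (Rabs c) 1)))...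
  apply: Rmult_le_compat_l; [exact: Rabs_pos| lra].
have -> : eps = Rmult (Rdiv eps (Rplus (Rabs c) 1)) (Rplus (Rabs c) 1) by field; lra.
apply: Rmult_lt_compat_r => //.
Qed.

Lemma lim_pinf_mulcR f l c : lim_pinf f l -> lim_pinf (fun T => c * f T) (c * l).
Proof.
move=> H; have := lim_pinf_mulRc c H.
by move=> H' eps He; case: (H' eps He) => T0 HT; exists T0 => T hT; rewrite mulRE (Rmult_comm c (f T)) (Rmult_comm c l); exact: HT.
Qed.

Lemma lim_pinf_sum (I : Type) (r : seq I) (f : I -> R -> R) (L : I -> R) :
  (forall i, lim_pinf (f i) (L i)) ->
  lim_pinf (fun T => \sum_(i <- r) f i T) (\sum_(i <- r) L i).
Proof.
move=> H; elim: r => [|a r IH].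
  move=> eps He; exists 0 => T _; rewrite !big_nil Rminus_diag Rabs_R0; lra.
move=> eps He; case: (lim_pinf_plus (H a) IH He) => T0 HT; exists T0 => T hT.
by rewrite !big_cons; exact: HT.
Qed.

Lemma lim_pinf_unique f l1 l2 : lim_pinf f l1 -> lim_pinf f l2 -> l1 = l2.
Proof.
move=> H1 H2; apply: Rle_antisym; apply: Rnot_lt_le => Hlt.
- set e := Rdiv (Rminus l1 l2) 2.
  have He : Rlt 0 e by rewrite /e; lra.
  case: (H1 e He) => T1 h1; case: (H2 e He) => T2 h2.
  have a1 := h1 (Rmax T1 T2) (Rmax_l _ _); have a2 := h2 (Rmax T1 T2) (Rmax_r _ _).
  move: a1 a2; rewrite /e; set y := f _; move=> a1 a2.
  have := Rabs_def2 _ _ a1; have := Rabs_def2 _ _ a2; lra.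
- set e := Rdiv (Rminus l2 l1) 2.
  have He : Rlt 0 e by rewrite /e; lra.
  case: (H1 e He) => T1 h1; case: (H2 e He) => T2 h2.
  have a1 := h1 (Rmax T1 T2) (Rmax_l _ _); have a2 := h2 (Rmax T1 T2) (Rmax_r _ _).
  move: a1 a2; rewrite /e; set y := f _; move=> a1 a2.
  have := Rabs_def2 _ _ a1; have := Rabs_def2 _ _ a2; lra.
Qed.

Lemma lim_pinf_le f l c : (forall T, Rle 0 T -> Rle (f T) c) -> lim_pinf f l -> Rle l c.
Proof.
move=> Hb H; apply: Rnot_lt_le => Hlt.
set e := Rminus l c.
have He : Rlt 0 e by rewrite /e; lra.
case: (H e He) => T0 h.
have a := h (Rmax T0 0) (Rmax_l _ _).
have b := Hb (Rmax T0 0) (Rmax_r _ _).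
have := Rabs_def2 _ _ a; rewrite /e; lra.
Qed.

Lemma lim_qform p (Fm : R -> 'M[R]_p) (P : 'M[R]_p) v :
  (forall i j, lim_pinf (fun T => Fm T i j) (P i j)) ->
  lim_pinf (fun T => qform (Fm T) v) (qform P v).
Proof.
move=> H; rewrite qformE.
have : lim_pinf (fun T => bil (Fm T) v v) (bil P v v).
  apply: lim_pinf_sum => j; apply: lim_pinf_mulRc; apply: lim_pinf_sum => i.
  exact: lim_pinf_mulcR.
by move=> H' eps He; case: (H' eps He) => T0 HT; exists T0 => T hT; rewrite qformE; exact: HT.
Qed.

Lemma improper_RInt f l : improper_int0 f l ->
  (forall T, ex_RInt f 0 T) /\ lim_pinf (fun T => RInt f 0 T) l.
Proof.
case=> pr H; split.
  by move=> T; exact: (ex_RInt_Reals_1 _ _ _ (pr T)).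
move=> eps He; case: (H eps He) => T0 HT; exists T0 => T hT.
rewrite (RInt_Reals f 0 T (pr T)); exact: HT.
Qed.


Lemma qformD p (A B : 'M[R]_p) u : qform (A + B) u = qform A u + qform B u.
Proof. by rewrite /qform mulmxDr mulmxDl mxE. Qed.

Lemma qformN p (A : 'M[R]_p) u : qform (- A) u = - qform A u.
Proof. by rewrite /qform mulmxN mulNmx mxE. Qed.

Lemma qformB p (A B : 'M[R]_p) u : qform (A - B) u = qform A u - qform B u.
Proof. by rewrite qformD qformN. Qed.

Lemma continuous_mulmxv p q (C : 'M[R]_(p, q)) (a : R -> 'cV[R]_q) x :
  (forall l, continuous (fun t => a t l 0) x) ->
  forall i, continuous (fun t => (C *m a t) i 0) x.
Proof.
move=> H i; apply: (continuous_ext (fun t => \sum_l C i l * a t l 0)) => [t|].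
  by rewrite mxE.
apply: continuous_bigsum => l; apply: continuous_mulR (H l); exact: continuous_const.
Qed.

Lemma bound_integral k q (M : 'M[R]_k) (N : 'M[R]_(k, q)) (Xs : 'M[R]_k) X
  (HX : is_expm M X) (v : 'cV[R]_k) (T : R) (IT : R) :
  (forall w, Rle 0 (qform Xs w)) ->
  (forall u, Rle (qform (M *m Xs + Xs *m M^T + N *m N^T) u) 0) ->
  Rle 0 T ->
  is_RInt (fun t => qform (X t *m N *m N^T *m (X t)^T) v) 0 T IT ->
  Rle IT (qform Xs v).
Proof.
move=> Hpsd Hlyap HT HInt.
have Hd := expm_deriv HX.
set u := fun t => (X t)^T *m v.
set du := fun t => M^T *m u t.
have Hu : forall t i, is_derive (fun s => u s i 0) t (du t i 0).
  move=> t i.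
  have -> : du t i 0 = (((X t *m M)^T) *m v) i 0.
    by rewrite /du /u trmx_mul mulmxA.
  apply: (is_derive_mulmxv (A := fun s => (X s)^T)) => i' l.
  apply: (is_derive_ext (fun s => X s l i')) => [s|]; first by rewrite mxE.
  by rewrite mxE; exact: Hd.
have Huc : forall t i, continuous (fun s => u s i 0) t.
  move=> t i; apply: ex_derive_continuous; eexists; exact: Hu.
set hf := fun t => bil Xs (u t) (u t).
set dh := fun t => bil Xs (du t) (u t) + bil Xs (u t) (du t).
have Hh : forall t, is_derive hf t (dh t).
  move=> t; apply: is_derive_bil => i; exact: Hu.
have Hduc : forall t i, continuous (fun s => du s i 0) t.
  move=> t; apply: continuous_mulmxv => l; exact: Huc.
have Hdc : forall t, continuous dh t.
  move=> t; apply: (continuous_plus (fun s => bil Xs (du s) (u s)) (fun s => bil Xs (u s) (du s))).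
    by apply: continuous_bil => i; [exact: Hduc | exact: Huc].
  by apply: continuous_bil => i; [exact: Huc | exact: Hduc].
have HR := is_RInt_derive hf dh 0 T (fun x _ => Hh x) (fun x _ => Hdc x).
have HRo := is_RInt_opp _ _ _ _ HR.
have Hle : Rle IT (Hierarchy.opp (minus (hf T) (hf 0))).
  apply: (is_RInt_le _ _ _ _ _ _ HT HInt HRo) => x _.
  have E1 : qform (X x *m N *m N^T *m (X x)^T) v = qform (N *m N^T) (u x).
    by rewrite /qform /u trmx_mul trmxK !mulmxA.
  have E2 : dh x = qform (M *m Xs) (u x) + qform (Xs *m M^T) (u x).
    rewrite /dh -!bilE /qform /du trmx_mul trmxK !mulmxA.
    by [].
  have := Hlyap (u x); rewrite !qformD -E2 -E1.
  rewrite /Hierarchy.opp /=; rewrite !addRE; lra.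
have Hh0 : hf 0 = qform Xs v by rewrite /hf /u (expm0 HX) trmx1 mul1mx qformE.
have HhT : Rle 0 (hf T) by rewrite /hf -qformE; exact: Hpsd.
move: Hle; rewrite /Hierarchy.opp /minus /plus /Hierarchy.opp /= Hh0; lra.
Qed.

Lemma main_gramian k q (M : 'M[R]_k) (N : 'M[R]_(k, q)) (Xs P : 'M[R]_k) :
  Xs^T = Xs -> (forall w, Rle 0 (qform Xs w)) ->
  (forall u, Rle (qform (M *m Xs + Xs *m M^T + N *m N^T) u) 0) ->
  ctrb_gramian M N P -> loewner_le P Xs.
Proof.
move=> Hsym Hpsd Hlyap [X [Y [HX HY HI]]].
have HYX := expm_tr HX HY.
set F := fun t => X t *m N *m N^T *m Y t.
have HI' : forall i j, (forall T, ex_RInt (fun t => F t i j) 0 T) /\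
    lim_pinf (fun T => RInt (fun t => F t i j) 0 T) (P i j).
  move=> i j; exact: improper_RInt (HI i j).
have HFsym : forall t, (F t)^T = F t.
  by move=> t; rewrite /F HYX !trmx_mul !trmxK !mulmxA.
have HPsym : P^T = P.
  apply/matrixP => i j; rewrite mxE.
  have e : (fun t => F t i j) = (fun t => F t j i).
    by apply: functional_extensionality => t; rewrite -{1}HFsym mxE.
  apply: (lim_pinf_unique (proj2 (HI' j i))); rewrite -e; exact: (proj2 (HI' i j)).
split; first by rewrite linearB /= Hsym HPsym.
move=> v; rewrite qformB.
set PT := fun T => \matrix_(i, j) RInt (fun t => F t i j) 0 T.
have Hlim : lim_pinf (fun T => qform (PT T) v) (qform P v).
  apply: lim_qform => i j.
  move=> eps He; case: (proj2 (HI' i j) eps He) => T0 HT0; exists T0 => T hT.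
  rewrite /PT mxE; exact: HT0.
have Hb : forall T, Rle 0 T -> Rle (qform (PT T) v) (qform Xs v).
  move=> T HT; apply: (bound_integral HX Hpsd Hlyap HT).
  apply: (is_RInt_ext (fun t => qform (F t) v)) => [t _|].
    by rewrite /F HYX.
  apply: is_RInt_qform => i j; rewrite /PT mxE.
  apply: RInt_correct; exact: (proj1 (HI' i j)).
have := lim_pinf_le Hb Hlim; rewrite subRE; lra.
Qed.


Definition idx m1 m2 (k : 'I_(m1 * m2)) : 'I_m1 * 'I_m2 :=
  enum_val (cast_ord (esym (mxvec_cast m1 m2)) k).
Definition unidx m1 m2 (p : 'I_m1 * 'I_m2) : 'I_(m1 * m2) :=
  cast_ord (mxvec_cast m1 m2) (enum_rank p).

Lemma idxK m1 m2 : cancel (@unidx m1 m2) (@idx m1 m2).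
Proof. by move=> p; rewrite /idx /unidx cast_ordK enum_rankK. Qed.

Lemma unidxK m1 m2 : cancel (@idx m1 m2) (@unidx m1 m2).
Proof. by move=> k; rewrite /idx /unidx enum_valK cast_ordKV. Qed.

Lemma sum_idx m1 m2 (F : 'I_m1 * 'I_m2 -> R) :
  \sum_(k < m1 * m2) F (idx k) = \sum_p F p.
Proof.
rewrite (reindex (@unidx m1 m2)); last by exists (@idx m1 m2) => x _; [exact: idxK | exact: unidxK].
by apply: eq_bigr => p _; rewrite idxK.
Qed.

Lemma sum_pairR m1 m2 (F : 'I_m1 -> 'I_m2 -> R) :
  \sum_(p : 'I_m1 * 'I_m2) F p.1 p.2 = \sum_a \sum_b F a b.
Proof. by rewrite pair_big. Qed.

Lemma kronE m1 n1 m2 n2 (A : 'M[R]_(m1, n1)) (B : 'M[R]_(m2, n2)) k l :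
  kron A B k l = A (idx k).1 (idx l).1 * B (idx k).2 (idx l).2.
Proof. by rewrite /kron mxE. Qed.

Lemma kron_mul m1 n1 p1 m2 n2 p2 (A : 'M[R]_(m1, n1)) (B : 'M[R]_(m2, n2))
  (C : 'M[R]_(n1, p1)) (D : 'M[R]_(n2, p2)) :
  kron A B *m kron C D = kron (A *m C) (B *m D).
Proof.
apply/matrixP => k l; rewrite [RHS]kronE !mxE big_distrlr /=.
under eq_bigr => j _ do rewrite !kronE.
rewrite (sum_idx (fun p => A (idx k).1 p.1 * B (idx k).2 p.2 * (C p.1 (idx l).1 * D p.2 (idx l).2))).
rewrite (sum_pairR (fun a b => A (idx k).1 a * B (idx k).2 b * (C a (idx l).1 * D b (idx l).2))).
apply: eq_bigr => a _; apply: eq_bigr => b _; by rewrite mulrACA.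
Qed.

Lemma kron_tr m1 n1 m2 n2 (A : 'M[R]_(m1, n1)) (B : 'M[R]_(m2, n2)) :
  (kron A B)^T = kron A^T B^T.
Proof. by apply/matrixP => k l; rewrite mxE !kronE !mxE. Qed.

Lemma kronDl m1 n1 m2 n2 (A1 A2 : 'M[R]_(m1, n1)) (B : 'M[R]_(m2, n2)) :
  kron (A1 + A2) B = kron A1 B + kron A2 B.
Proof. by apply/matrixP => k l; rewrite kronE [RHS]mxE !kronE mxE mulrDl. Qed.

Lemma kronNl m1 n1 m2 n2 (A : 'M[R]_(m1, n1)) (B : 'M[R]_(m2, n2)) :
  kron (- A) B = - kron A B.
Proof. by apply/matrixP => k l; rewrite kronE [RHS]mxE !kronE mxE mulNr. Qed.

Lemma kronDr m1 n1 m2 n2 (A : 'M[R]_(m1, n1)) (B1 B2 : 'M[R]_(m2, n2)) :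
  kron A (B1 + B2) = kron A B1 + kron A B2.
Proof. by apply/matrixP => k l; rewrite kronE [RHS]mxE !kronE mxE mulrDr. Qed.

Lemma kronNr m1 n1 m2 n2 (A : 'M[R]_(m1, n1)) (B : 'M[R]_(m2, n2)) :
  kron A (- B) = - kron A B.
Proof. by apply/matrixP => k l; rewrite kronE [RHS]mxE !kronE mxE mulrN. Qed.

Lemma kronBl m1 n1 m2 n2 (A1 A2 : 'M[R]_(m1, n1)) (B : 'M[R]_(m2, n2)) :
  kron (A1 - A2) B = kron A1 B - kron A2 B.
Proof. by rewrite kronDl kronNl. Qed.

Lemma kronBr m1 n1 m2 n2 (A : 'M[R]_(m1, n1)) (B1 B2 : 'M[R]_(m2, n2)) :
  kron A (B1 - B2) = kron A B1 - kron A B2.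
Proof. by rewrite kronDr kronNr. Qed.

Lemma sum_pair m1 m2 (F : 'I_m1 * 'I_m2 -> R) :
  \sum_(p : 'I_m1 * 'I_m2) F p = \sum_a \sum_b F (a, b).
Proof. by rewrite pair_big; apply: eq_bigr => -[a b]. Qed.

Definition sl1 p r (w : 'cV[R]_(p * r)) (a : 'I_p) : 'cV[R]_r :=
  \col_b w (unidx (a, b)) 0.

Lemma qform_kron p r (A : 'M[R]_p) (B : 'M[R]_r) (w : 'cV[R]_(p * r)) :
  qform (kron A B) w = \sum_a \sum_c A a c * bil B (sl1 w a) (sl1 w c).
Proof.
set G := fun q : 'I_p * 'I_r => w (unidx q) 0.
rewrite qformE /bil.
transitivity (\sum_(l < p * r) (\sum_(k < p * r) G (idx k) * (A (idx k).1 (idx l).1 * B (idx k).2 (idx l).2)) * G (idx l)).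
  apply: eq_bigr => l _; rewrite /G unidxK; congr (_ * _).
  by apply: eq_bigr => k _; rewrite unidxK kronE.
rewrite (sum_idx (fun pl => (\sum_(k < p * r) G (idx k) * (A (idx k).1 pl.1 * B (idx k).2 pl.2)) * G pl)).
under eq_bigr => pl _ do rewrite (sum_idx (fun pk => G pk * (A pk.1 pl.1 * B pk.2 pl.2))) sum_pair.
rewrite sum_pair /=.
under eq_bigr => c _ do under eq_bigr => d _ do rewrite mulr_suml.
under eq_bigr => c _ do under eq_bigr => d _ do under eq_bigr => a _ do rewrite mulr_suml.
under [RHS]eq_bigr => a _ do under eq_bigr => c _ do rewrite mulr_sumr.
under [RHS]eq_bigr => a _ do under eq_bigr => c _ do under eq_bigr => d _ do rewrite mulr_suml mulr_sumr.
rewrite [RHS]exchange_big; apply: eq_bigr => c _.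
rewrite [RHS]exchange_big; apply: eq_bigr => d _.
apply: eq_bigr => a _; apply: eq_bigr => b _.
rewrite !mxE /G; Rring.
Qed.

Lemma qform_kron_diag p r (D : 'M[R]_p) (Z : 'M[R]_r) (w : 'cV[R]_(p * r)) :
  diagonal D -> (forall i, Rle 0 (D i i)) -> (forall x, Rle 0 (qform Z x)) ->
  Rle 0 (qform (kron D Z) w).
Proof.
move=> Hd Hp Hz; rewrite qform_kron; apply: sum_ge0 => a _.
rewrite (bigD1 a) //= big1 ?addr0.
  rewrite -qformE mulRE; apply: Rmult_le_pos; [exact: Hp | exact: Hz].
move=> c Hc; rewrite Hd ?mul0r //; by rewrite eq_sym.
Qed.

Lemma qform_delta p (D : 'M[R]_p) i : qform D (delta_mx i 0) = D i i.
Proof. by rewrite /qform trmx_delta -rowE -colE !mxE. Qed.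

Lemma psd_diag_ge0 p (D : 'M[R]_p) i : psd D -> Rle 0 (D i i).
Proof. by case=> _ H; rewrite -qform_delta; exact: H. Qed.

Lemma qform_kron_gram p r s (S : 'M[R]_p) (W : 'M[R]_(r, s)) (w : 'cV[R]_(p * r)) :
  (forall x, Rle 0 (qform S x)) -> Rle 0 (qform (kron S (W *m W^T)) w).
Proof.
move=> HS; rewrite qform_kron.
set z := fun a (e : 'I_s) => (W^T *m sl1 w a) e 0.
set y := fun e => \col_a z a e.
have Hb : forall a c, bil (W *m W^T) (sl1 w a) (sl1 w c) = \sum_e z a e * z c e.
  move=> a c; rewrite -bilE.
  have -> : (sl1 w a)^T *m (W *m W^T) *m sl1 w c = (W^T *m sl1 w a)^T *m (W^T *m sl1 w c).
    by rewrite trmx_mul trmxK !mulmxA.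
  rewrite mxE; apply: eq_bigr => e _; by rewrite mxE.
suff -> : (\sum_a \sum_c S a c * bil (W *m W^T) (sl1 w a) (sl1 w c)) = \sum_e bil S (y e) (y e).
  apply: sum_ge0 => e _; rewrite -qformE; exact: HS.
rewrite {2}/bil.
under eq_bigr => a _ do under eq_bigr => c _ do rewrite Hb mulr_sumr.
rewrite exchange_big.
under eq_bigr => c _ do rewrite exchange_big.
rewrite exchange_big; apply: eq_bigr => e _.
under [RHS]eq_bigr => c _ do rewrite mulr_suml.
apply: eq_bigr => c _; apply: eq_bigr => a _.
rewrite !mxE; Rring.
Qed.


Lemma pd_unit p (Q : 'M[R]_p) : pd Q -> Q \in unitmx.
Proof.
case=> Hs Hp; rewrite -row_free_unit -kermx_eq0.
apply/eqP; apply/row_matrixP => i; rewrite row0.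
apply/eqP; apply/negPn/negP => Hnz.
set x := (row i (kermx Q))^T.
have Hx : x != 0 by rewrite /x trmx_eq0.
have := Hp x Hx.
rewrite /qform /x trmxK -row_mul mulmx_ker row0 mul0mx mxE.
move=> h; exact: (Rlt_irrefl _ h).
Qed.

Lemma qform_sym_congr p (Q Z : 'M[R]_p) x : Q^T = Q ->
  qform (Q *m Z *m Q) x = qform Z (Q *m x).
Proof. by move=> HQ; rewrite /qform trmx_mul HQ !mulmxA. Qed.

Lemma inv_psd p (Q : 'M[R]_p) : pd Q -> forall w, Rle 0 (qform (invmx Q) w).
Proof.
move=> HQ w; have Hu := pd_unit HQ; case: HQ => Hs Hp.
have -> : invmx Q = invmx Q *m Q *m invmx Q by rewrite mulmxK.
have Hsi : (invmx Q)^T = invmx Q by rewrite trmx_inv Hs.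
rewrite qform_sym_congr //.
case: (boolP (invmx Q *m w == 0)) => [/eqP -> | Hnz].
  by rewrite /qform trmx0 !mul0mx mxE; exact: Rle_refl.
exact: Rlt_le (Hp _ Hnz).
Qed.

Lemma ctrb_lyap n m K mb (Q J Rm : 'M[R]_n) (B : 'M[R]_(n, m)) (Pic Le : 'M[R]_K)
  (EG : 'M[R]_(K, mb)) (u : 'cV[R]_(K * n)) :
  Q \in unitmx -> Q^T = Q -> J^T = - J -> psd Rm -> diagonal Pic -> psd Pic ->
  psd (Le *m Pic + Pic *m Le^T - EG *m EG^T) ->
  Rle (qform ((kron 1%:M ((J - Rm) *m Q) - kron Le (B *m (B^T *m Q))) *m kron Pic (invmx Q)
     + kron Pic (invmx Q) *m (kron 1%:M ((J - Rm) *m Q) - kron Le (B *m (B^T *m Q)))^T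
     + kron EG B *m (kron EG B)^T) u) 0.
Proof.
move=> HU HQ HJ [HRs HRp] Hd Hpic [_ HS].
have e1 : (kron 1%:M ((J - Rm) *m Q) - kron Le (B *m (B^T *m Q))) *m kron Pic (invmx Q)
   = kron Pic (J - Rm) - kron (Le *m Pic) (B *m B^T).
  by rewrite mulmxBl !kron_mul mul1mx mulmxK // !mulmxA mulmxK.
have e2 : kron Pic (invmx Q) *m (kron 1%:M ((J - Rm) *m Q) - kron Le (B *m (B^T *m Q)))^T
   = kron Pic (- J - Rm) - kron (Pic *m Le^T) (B *m B^T).
  rewrite linearB /= !kron_tr trmx1 mulmxBr !kron_mul mulmx1.
  rewrite !trmx_mul trmxK HQ linearB /= HJ HRs mulKmx // -mulmxA mulKmx //.
have e3 : kron EG B *m (kron EG B)^T = kron (EG *m EG^T) (B *m B^T).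
  by rewrite kron_tr kron_mul.
rewrite e1 e2 e3 !qformD !qformN !kronBr !kronNr !qformD !qformN.
have h1 : Rle 0 (qform (kron Pic Rm) u).
  apply: qform_kron_diag => // i; exact: psd_diag_ge0.
have h2 : Rle 0 (qform (kron (Le *m Pic + Pic *m Le^T - EG *m EG^T) (B *m B^T)) u).
  exact: qform_kron_gram.
move: h2; rewrite !kronDl !kronNl !qformD !qformN.
rewrite !RE; lra.
Qed.

Lemma obs_lyap n m K qb (Q J Rm : 'M[R]_n) (B : 'M[R]_(n, m)) (Pio Le : 'M[R]_K)
  (HF : 'M[R]_(qb, K)) (u : 'cV[R]_(K * n)) :
  Q^T = Q -> J^T = - J -> psd Rm -> diagonal Pio -> psd Pio ->
  psd (Le^T *m Pio + Pio *m Le - HF^T *m HF) ->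
  Rle (qform ((kron 1%:M ((J - Rm) *m Q) - kron Le (B *m (B^T *m Q)))^T *m kron Pio Q
     + kron Pio Q *m (kron 1%:M ((J - Rm) *m Q) - kron Le (B *m (B^T *m Q)))^T^T
     + (kron HF (B^T *m Q))^T *m (kron HF (B^T *m Q))^T^T) u) 0.
Proof.
move=> HQ HJ [HRs HRp] Hd Hpio [_ HS].
rewrite !trmxK.
have eA : ((J - Rm) *m Q)^T *m Q = Q *m (- J) *m Q - Q *m Rm *m Q.
  by rewrite trmx_mul HQ linearB /= HJ HRs mulmxBr mulmxBl.
have eB : (B *m (B^T *m Q))^T *m Q = Q *m B *m (B^T *m Q).
  by rewrite !trmx_mul trmxK HQ !mulmxA.
have e1 : (kron 1%:M ((J - Rm) *m Q) - kron Le (B *m (B^T *m Q)))^T *m kron Pio Q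
   = kron Pio (Q *m (- J) *m Q - Q *m Rm *m Q) - kron (Le^T *m Pio) (Q *m B *m (B^T *m Q)).
  by rewrite linearB /= !kron_tr trmx1 mulmxBl !kron_mul mul1mx eA eB.
have e2 : kron Pio Q *m (kron 1%:M ((J - Rm) *m Q) - kron Le (B *m (B^T *m Q)))
   = kron Pio (Q *m J *m Q - Q *m Rm *m Q) - kron (Pio *m Le) (Q *m B *m (B^T *m Q)).
  by rewrite mulmxBr !kron_mul mulmx1 mulmxBl mulmxBr !mulmxA.
have e3 : (kron HF (B^T *m Q))^T *m kron HF (B^T *m Q)
   = kron (HF^T *m HF) (Q *m B *m (B^T *m Q)).
  by rewrite kron_tr kron_mul trmx_mul trmxK HQ.
rewrite e1 e2 e3 !qformD !qformN !kronBr ?kronNr ?qformD ?qformN.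
rewrite ?mulmxN ?mulNmx ?kronNr ?qformN.
have h1 : Rle 0 (qform (kron Pio (Q *m Rm *m Q)) u).
  apply: qform_kron_diag => // [i|x]; first exact: psd_diag_ge0.
  rewrite qform_sym_congr //; exact: HRp.
have h2 : Rle 0 (qform (kron (Le^T *m Pio + Pio *m Le - HF^T *m HF) (Q *m B *m (B^T *m Q))) u).
  have -> : Q *m B *m (B^T *m Q) = (Q *m B) *m (Q *m B)^T by rewrite trmx_mul HQ !mulmxA.
  exact: qform_kron_gram.
move: h2; rewrite !kronDl !kronNl !qformD !qformN.
rewrite !RE; set b := qform (kron Pio (Q *m Rm *m Q)) u in h1 *; set a := qform (kron Pio (Q *m J *m Q)) u; set c := qform (kron (Le^T *m Pio) _) u; set d := qform (kron (Pio *m Le) _) u; set e := qform (kron (HF^T *m HF) _) u; lra.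
Qed.

Unset Implicit Arguments.


Theorem theorem2
  (n m nb mb pb K : nat)
  (Q J Rm : 'M[R]_n) (B : 'M[R]_(n, m))
  (w : 'I_nb -> 'I_nb -> R)
  (G : 'M[R]_(nb, mb)) (H : 'M[R]_(pb, nb))
  (ed : 'I_K -> 'I_nb * 'I_nb)
  (Pic Pio : 'M[R]_K) :
  pd Q -> skew_sym J -> psd Rm ->
  minimal ((J - Rm) *m Q) B (B^T *m Q) ->
  (1 < nb)%N ->
  (forall i j : 'I_nb, i != j -> Rle 0 (w i j)) ->
  edge_enum w ed ->
  AssumptionA w ->
  diagonal Pic -> psd Pic ->
  diagonal Pio -> psd Pio ->
  let A := (J - Rm) *m Q in
  let C := B^T *m Q in
  let E := incE ed in
  let F := incF w ed in
  let Le := edge_laplacian w ed in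
  let Ae := kron (1%:M : 'M[R]_K) A - kron Le (B *m C) in
  psd (Le *m Pic + Pic *m Le^T - E^T *m G *m G^T *m E) ->
  psd (Le^T *m Pio + Pio *m Le - F^T *m H^T *m H *m F) ->
  (forall Pe : 'M[R]_(K * n),
      ctrb_gramian Ae (kron (E^T *m G) B) Pe ->
      loewner_le Pe (kron Pic (invmx Q))) /\
  (forall Qf : 'M[R]_(K * n),
      obsv_gramian Ae (kron (H *m F) C) Qf ->
      loewner_le Qf (kron Pio Q)).
Proof.
move=> HQ HJ HRm _ _ _ _ _ HPicd HPic HPiod HPio A C E F Le Ae HS1 HS2.
have HQs : Q^T = Q by case: HQ.
have HU := pd_unit HQ.
split.
  move=> Pe Hg; apply: (main_gramian _ _ _ Hg).
  - by rewrite kron_tr (proj1 HPic) trmx_inv HQs.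
  - move=> x; apply: qform_kron_diag => // [i|y]; first exact: psd_diag_ge0.
    exact: inv_psd.
  - move=> u; apply: (@ctrb_lyap n m K mb Q J Rm B Pic Le (E^T *m G) u) => //.
    by rewrite [(E^T *m G)^T]trmx_mul trmxK [E^T *m G *m (G^T *m E)]mulmxA.
move=> Qf [X [Y [HX HY HI]]].
have Hg : ctrb_gramian Ae^T (kron (H *m F) C)^T Qf.
  exists Y, X; split => //; first by rewrite trmxK.
  by rewrite trmxK.
apply: (main_gramian _ _ _ Hg).
- by rewrite kron_tr (proj1 HPio) HQs.
- move=> x; apply: qform_kron_diag => // [i|y]; first exact: psd_diag_ge0.
  case: HQ => _ Hp; case: (boolP (y == 0)) => [/eqP -> | Hnz].
    by rewrite /qform trmx0 !mul0mx mxE; exact: Rle_refl.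
  exact: Rlt_le (Hp _ Hnz).
- move=> u; apply: (@obs_lyap n m K pb Q J Rm B Pio Le (H *m F) u) => //.
  by rewrite [(H *m F)^T]trmx_mul [F^T *m H^T *m (H *m F)]mulmxA.
Qed.
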